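(* Let $n\ge2$, let $r_1,\dots,r_{4^{n-1}+1}$ be the vertices of an affine Koch curve at step $n$, and let $w_n=c_1c_2\cdots c_{2\cdot 4^{n-2}-1}$ be its Koch code. Then: (i) for every $k$ with $c_k=1$ the affine curvatures satisfy $\kappa_{2k}=\kappa_{2k+1}=-1$, $\bar\kappa_{2k}=-1$, $\bar\kappa_{2k+1}=1$; for every $k$ with $c_k=0$ they satisfy $\kappa_{2k}=\kappa_{2k+1}=\bar\kappa_{2k}=\bar\kappa_{2k+1}=1$; (ii) $w_2=1$ and $w_{n+1}=w_n\,0\,w_n\,1\,w_n\,0\,w_n$ (concatenation of words) for all $n\ge 2$; in particular $w_3=1011101$, $w_4=1011101\,0\,1011101\,1\,1011101\,0\,1011101$, and $w_n$ has $2\cdot4^{n-2}-1$ letters.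
   Context: Let $R_\theta$ denote counterclockwise rotation of $\mathbb R^2$ by the angle $\theta$. The standard Koch curve at step $n$ is the polygon $K_n$ with vertices $r_1,\dots,r_{4^{n-1}+1}$ defined recursively: $K_1$ has vertices $(0,0),(1,0)$; $K_{n+1}$ is obtained from $K_n$ by replacing each edge from $p$ to $q$, in order, by the four edges through the points $p,\ p+\tfrac13(q-p),\ p+\tfrac13(q-p)+\tfrac13R_{\pi/3}(q-p),\ p+\tfrac23(q-p),\ q$, and numbering the resulting vertices consecutively starting from $(0,0)$. An affine Koch curve at step $n$ is the image of $K_n$ under an invertible affine map of $\mathbb R^2$, with vertices numbered correspondingly. A vertex $r_i$ ($2\le i\le 4^{n-1}$) of $K_n$ is a sharp point if the angle $\angle r_{i-1}r_ir_{i+1}$ equals $\pi/3$. For $n\ge 2$ the Koch code at step $n$ is the word $w_n=c_1\cdots c_{2\cdot4^{n-2}-1}$ over $\{0,1\}$ with $c_k=1$ iff $r_{2k+1}$ is a sharp point of $K_n$ (the same code is used for affine images of $K_n$). Affine curvatures: for a polygon with vertices $r_1,\dots,r_N\in\mathbb R^2$ put $t_k=r_{k+1}-r_k$ and $[a,b]=a_1b_2-a_2b_1$ for $a,b\in\mathbb R^2$. For $2\le k\le N-2$ with $[t_{k-1},t_k]\ne0$ the first and second affine curvatures at $r_k$ are $\kappa_k=\dfrac{[t_k,t_{k+1}]}{[t_{k-1},t_k]}$ and $\bar\kappa_k=\dfrac{[t_{k-1},t_{k+1}]}{[t_{k-1},t_k]}$. *)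

(* Defs.v *)
From Stdlib Require Import Reals Lra List Arith.
Import ListNotations.
Open Scope R_scope.

Definition pt := (R * R)%type.
Definition padd (p q : pt) : pt := (fst p + fst q, snd p + snd q).
Definition psub (p q : pt) : pt := (fst p - fst q, snd p - snd q).
Definition pscale (c : R) (p : pt) : pt := (c * fst p, c * snd p).
Definition rot (theta : R) (p : pt) : pt :=
  (cos theta * fst p - sin theta * snd p, sin theta * fst p + cos theta * snd p).

(* replace the edge p -> q by the four points after p (p itself is emitted by the previous step) *)
Definition koch_edge (p q : pt) : list pt :=
  let d := psub q p in
  [ padd p (pscale (1/3) d);
    padd (padd p (pscale (1/3) d)) (pscale (1/3) (rot (PI/3) d));
    padd p (pscale (2/3) d);
    q ].

Fixpoint refine_aux (p : pt) (l : list pt) : list pt :=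
  match l with
  | [] => []
  | q :: l' => koch_edge p q ++ refine_aux q l'
  end.

Definition refine (l : list pt) : list pt :=
  match l with
  | [] => []
  | p :: l' => p :: refine_aux p l'
  end.

(* K n : vertex list of the standard Koch curve at step n (n >= 1); K 0 := K 1 by convention *)
Fixpoint K (n : nat) : list pt :=
  match n with
  | O | S O => [(0,0); (1,0)]
  | S m => refine (K m)
  end.

(* 1-based vertex access: r_i *)
Definition vtx (l : list pt) (i : nat) : pt := nth (i - 1)%nat l (0,0).

Definition dot (a b : pt) : R := fst a * fst b + snd a * snd b.
Definition pnorm (a : pt) : R := sqrt (dot a a).
Definition vangle (a b : pt) : R := acos (dot a b / (pnorm a * pnorm b)).

Definition vertex_angle (l : list pt) (i : nat) : R :=
  vangle (psub (vtx l (i - 1)) (vtx l i)) (psub (vtx l (i + 1)) (vtx l i)).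

Definition sharp (l : list pt) (i : nat) : Prop := vertex_angle l i = PI / 3.

Definition sharpb (l : list pt) (i : nat) : bool :=
  if Req_EM_T (vertex_angle l i) (PI / 3) then true else false.

Definition koch_code (n : nat) : list bool :=
  map (fun k => sharpb (K n) (2 * k + 1)) (seq 1 (2 * 4 ^ (n - 2) - 1)).

Record affine_map := { a11 : R; a12 : R; a21 : R; a22 : R; b1 : R; b2 : R }.
Definition aff_det (f : affine_map) : R := a11 f * a22 f - a12 f * a21 f.
Definition aff_apply (f : affine_map) (p : pt) : pt :=
  (a11 f * fst p + a12 f * snd p + b1 f, a21 f * fst p + a22 f * snd p + b2 f).

Definition bracket (a b : pt) : R := fst a * snd b - snd a * fst b.
Definition tvec (l : list pt) (k : nat) : pt := psub (vtx l (k + 1)) (vtx l k).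
Definition kappa (l : list pt) (k : nat) : R :=
  bracket (tvec l k) (tvec l (k + 1)) / bracket (tvec l (k - 1)) (tvec l k).
Definition kappabar (l : list pt) (k : nat) : R :=
  bracket (tvec l (k - 1)) (tvec l (k + 1)) / bracket (tvec l (k - 1)) (tvec l k).

(* Main.v *)
Require Import Defs.
From Stdlib Require Import Reals List Arith ZArith Lia Lra.
Import ListNotations.
Open Scope R_scope.

Fixpoint diffs (l : list pt) : list pt :=
  match l with p :: ((q :: _) as l') => psub q p :: diffs l' | _ => [] end.
Fixpoint zdiffs (l : list Z) : list Z :=
  match l with p :: ((q :: _) as l') => (q - p)%Z :: zdiffs l' | _ => [] end.
Definition blk (d : Z) : list Z := [d; (d+1)%Z; (d-1)%Z; d].
Fixpoint dirs (n : nat) : list Z :=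
  match n with O | S O => [0%Z] | S m => flat_map blk (dirs m) end.
Definition T n := zdiffs (dirs n).
Definition F (l : list Z) := flat_map (fun t => [t; 1%Z; (-2)%Z; 1%Z]) l.
Fixpoint odds (l : list Z) : list Z :=
  match l with a :: b :: l' => b :: odds l' | _ => [] end.
Fixpoint evens (l : list Z) : list Z :=
  match l with a :: b :: l' => a :: evens l' | [a] => [a] | [] => [] end.

Lemma zdiffs_cons2 : forall x y l, zdiffs (x :: y :: l) = (y - x)%Z :: zdiffs (y :: l).
Proof. reflexivity. Qed.

Lemma zd_blk : forall l, l <> [] -> zdiffs (flat_map blk l) = [1;-2;1]%Z ++ F (zdiffs l).
Proof.
  induction l as [|a l IH]; intros H; [congruence|].
  destruct l as [|b l].
  - simpl. f_equal; [ring|f_equal; [ring|f_equal; ring]].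
  - assert (E : flat_map blk (b :: l) = b :: (b+1)%Z :: (b-1)%Z :: b :: flat_map blk l) by reflexivity.
    specialize (IH ltac:(congruence)). rewrite E in IH.
    change (flat_map blk (a :: b :: l)) with (blk a ++ flat_map blk (b :: l)).
    rewrite E. unfold blk at 1. cbn [app].
    rewrite !zdiffs_cons2 in *.

    rewrite IH. change (F ((b - a)%Z :: zdiffs (b :: l))) with
      ((b-a)%Z :: 1%Z :: (-2)%Z :: 1%Z :: F (zdiffs (b :: l))).
    replace (a + 1 - a)%Z with 1%Z by ring.
    replace (a - 1 - (a + 1))%Z with (-2)%Z by ring.
    replace (a - (a - 1))%Z with 1%Z by ring.
    reflexivity.
Qed.

Lemma dirs_ne : forall n, dirs n <> [].
Proof.
  induction n as [|n IH]; [discriminate|]. destruct n; [discriminate|].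
  change (dirs (S (S n))) with (flat_map blk (dirs (S n))).
  destruct (dirs (S n)); [congruence|]. simpl. discriminate.
Qed.

Lemma T_rec : forall n, (1 <= n)%nat -> T (S n) = [1;-2;1]%Z ++ F (T n).
Proof.
  intros n Hn. destruct n; [lia|]. unfold T.
  change (dirs (S (S n))) with (flat_map blk (dirs (S n))).
  apply zd_blk, dirs_ne.
Qed.

Lemma T2 : T 2 = [1;-2;1]%Z.
Proof. reflexivity. Qed.
Lemma T1 : T 1 = [].
Proof. reflexivity. Qed.

Lemma F_app : forall a b, F (a ++ b) = F a ++ F b.
Proof. intros; unfold F; apply flat_map_app. Qed.

Lemma T_cat : forall n, (1 <= n)%nat ->
  T (S n) = T n ++ 1%Z :: T n ++ (-2)%Z :: T n ++ 1%Z :: T n.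
Proof.
  induction n as [|n IH]; intros Hn; [lia|].
  destruct n as [|n].
  - reflexivity.
  - rewrite (T_rec (S (S n))) by lia. rewrite IH at 1 by lia.
    rewrite (T_rec (S n)) by lia.
    repeat (rewrite ?F_app; simpl). reflexivity.
Qed.

Lemma odds_app : forall k a x b, length a = (2*k+1)%nat ->
  odds (a ++ x :: b) = odds a ++ x :: odds b.
Proof.
  induction k as [|k IH]; intros a x b H.
  - destruct a as [|y [|z a]]; simpl in H; try lia. reflexivity.
  - destruct a as [|y [|z a]]; simpl in H; try lia. simpl.
    rewrite IH by lia. reflexivity.
Qed.

Lemma evens_app : forall k a x b, length a = (2*k+1)%nat ->
  evens (a ++ x :: b) = evens a ++ evens b.
Proof.
  induction k as [|k IH]; intros a x b H.
  - destruct a as [|y [|z a]]; simpl in H; try lia. reflexivity.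
  - destruct a as [|y [|z a]]; simpl in H; try lia. simpl.
    rewrite IH by lia. reflexivity.
Qed.

Lemma odds_len : forall k a, length a = (2*k+1)%nat -> length (odds a) = k.
Proof.
  induction k as [|k IH]; intros a H.
  - destruct a as [|y [|z a]]; simpl in H; try lia. reflexivity.
  - destruct a as [|y [|z a]]; simpl in H; try lia. simpl.
    rewrite IH by lia. reflexivity.
Qed.

Lemma evens_len : forall k a, length a = (2*k+1)%nat -> length (evens a) = S k.
Proof.
  induction k as [|k IH]; intros a H.
  - destruct a as [|y [|z a]]; simpl in H; try lia. reflexivity.
  - destruct a as [|y [|z a]]; simpl in H; try lia. simpl.
    rewrite IH by lia. reflexivity.
Qed.

Lemma nth_odds : forall i l, nth i (odds l) 0%Z = nth (2*i+1) l 0%Z.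
Proof.
  induction i as [|i IH]; intros l.
  - destruct l as [|y [|z l]]; reflexivity.
  - destruct l as [|y [|z l]]; simpl; try (destruct (i + S (i+0))%nat; reflexivity).
    rewrite IH. replace (i + S (i + 0) + 1)%nat with (S (2*i+1))%nat by lia. reflexivity.
Qed.

Lemma nth_evens : forall i l, nth i (evens l) 0%Z = nth (2*i) l 0%Z.
Proof.
  induction i as [|i IH]; intros l.
  - destruct l as [|y [|z l]]; reflexivity.
  - destruct l as [|y [|z l]]; simpl; try (destruct (i + S (i+0))%nat; reflexivity).
    + destruct i; reflexivity.
    + rewrite IH. replace (i + S (i + 0))%nat with (S (2*i))%nat by lia. reflexivity.
Qed.

Lemma pow4_pos : forall m, (1 <= 4 ^ m)%nat.
Proof. induction m; simpl; lia. Qed.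

Definition Mn (m : nat) : nat := (2 * 4 ^ m - 1)%nat.

Lemma T_len : forall m, length (T (S (S m))) = (2 * Mn m + 1)%nat.
Proof.
  induction m as [|m IH].
  - reflexivity.
  - rewrite T_cat by lia. repeat (rewrite length_app; cbn [length]). rewrite !IH.
    unfold Mn. rewrite (Nat.pow_succ_r' 4 m). pose proof (pow4_pos m). lia.
Qed.

Lemma T_vals : forall n, (1 <= n)%nat -> Forall (fun t => t = 1%Z \/ t = (-2)%Z) (T n).
Proof.
  induction n as [|n IH]; intros Hn; [lia|].
  destruct n as [|n]; [constructor|].
  rewrite T_cat by lia. specialize (IH ltac:(lia)).
  repeat (apply Forall_app; split; [assumption|]; constructor; [tauto|]). assumption.
Qed.

Lemma T_evens : forall m, Forall (fun t => t = 1%Z) (evens (T (S (S m)))).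
Proof.
  induction m as [|m IH].
  - repeat constructor.
  - rewrite T_cat by lia.
    rewrite (evens_app _ _ _ _ (T_len m)).
    rewrite (evens_app _ _ _ _ (T_len m)).
    rewrite (evens_app _ _ _ _ (T_len m)).
    repeat (apply Forall_app; split); assumption.
Qed.

Definition isM2 (t : Z) : bool := Z.eqb t (-2).

Lemma codeT_rec : forall m,
  let c := map isM2 (odds (T (S (S m)))) in
  map isM2 (odds (T (S (S (S m))))) = c ++ [false] ++ c ++ [true] ++ c ++ [false] ++ c.
Proof.
  intros m c; subst c. rewrite T_cat by lia.
  rewrite (odds_app _ _ _ _ (T_len m)).
  rewrite (odds_app _ _ _ _ (T_len m)).
  rewrite (odds_app _ _ _ _ (T_len m)).
  repeat (rewrite ?map_app; cbn [map]). reflexivity.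
Qed.

Definition e (z : Z) : pt := (cos (IZR z * (PI/3)), sin (IZR z * (PI/3))).
Definition Sn (z : Z) := sin (IZR z * (PI/3)).
Definition Cn (z : Z) := cos (IZR z * (PI/3)).
Fixpoint Lc (n : nat) : R := match n with O | S O => 1 | S m => Lc m / 3 end.
Definition kd (d : pt) : list pt :=
  [pscale (1/3) d; pscale (1/3) (rot (PI/3) d);
   psub (pscale (1/3) d) (pscale (1/3) (rot (PI/3) d)); pscale (1/3) d].

Lemma diffs_cons2 : forall x y l, diffs (x :: y :: l) = psub y x :: diffs (y :: l).
Proof. reflexivity. Qed.

Lemma cons_eq : forall (A : Type) (x y : A) l1 l2, x = y -> l1 = l2 -> x :: l1 = y :: l2.
Proof. intros; subst; reflexivity. Qed.

Lemma diffs_refine_aux : forall l p, diffs (p :: refine_aux p l) = flat_map kd (diffs (p :: l)).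
Proof.
  induction l as [|q l IH]; intros p; [reflexivity|].
  cbn [refine_aux]. unfold koch_edge. cbn [app]. rewrite !diffs_cons2.
  rewrite IH. cbn [flat_map]. unfold kd. cbn [app].
  destruct p as [p1 p2], q as [q1 q2]. unfold psub, padd, pscale, rot; cbn [fst snd].
  repeat (apply cons_eq; [f_equal; field|]). reflexivity.
Qed.

Lemma diffs_refine : forall l, diffs (refine l) = flat_map kd (diffs l).
Proof. intros [|p l]; [reflexivity|]. apply diffs_refine_aux. Qed.

Lemma kd_e : forall L d, kd (pscale L (e d)) = map (fun z => pscale (L/3) (e z)) (blk d).
Proof.
  intros L d. unfold kd, blk, e, pscale, psub, rot. cbn [map fst snd].
  rewrite plus_IZR, minus_IZR.
  set (x := IZR d * (PI/3)).
  replace ((IZR d + 1) * (PI/3)) with (x + PI/3) by (unfold x; ring).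
  replace ((IZR d - 1) * (PI/3)) with (x - PI/3) by (unfold x; ring).
  rewrite cos_plus, sin_plus, cos_minus, sin_minus, cos_PI3, sin_PI3.
  repeat (apply cons_eq; [f_equal; field|]). reflexivity.
Qed.

Lemma diffs_K : forall n, diffs (K n) = map (fun z => pscale (Lc n) (e z)) (dirs n).
Proof.
  induction n as [|n IH].
  - simpl. unfold e, pscale, psub. simpl. rewrite Rmult_0_l, cos_0, sin_0. apply cons_eq; [f_equal; ring|reflexivity].
  - destruct n as [|n].
    + simpl. unfold e, pscale, psub. simpl. rewrite Rmult_0_l, cos_0, sin_0. apply cons_eq; [f_equal; ring|reflexivity].
    + change (K (S (S n))) with (refine (K (S n))).
      rewrite diffs_refine, IH.
      change (dirs (S (S n))) with (flat_map blk (dirs (S n))).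
      change (Lc (S (S n))) with (Lc (S n) / 3).
      clear IH. induction (dirs (S n)) as [|d l IHl]; [reflexivity|].
      cbn [map flat_map]. rewrite kd_e, IHl, map_app. reflexivity.
Qed.

Lemma length_diffs : forall l, length (diffs l) = pred (length l).
Proof. induction l as [|a [|b l] IH]; [reflexivity|reflexivity|]. rewrite diffs_cons2. simpl in *. rewrite IH. reflexivity. Qed.

Lemma length_zdiffs : forall l, length (zdiffs l) = pred (length l).
Proof. induction l as [|a [|b l] IH]; [reflexivity|reflexivity|]. rewrite zdiffs_cons2. simpl in *. rewrite IH. reflexivity. Qed.

Lemma length_dirs : forall n, length (dirs n) = (4 ^ pred n)%nat.
Proof.
  induction n as [|n IH]; [reflexivity|]. destruct n as [|n]; [reflexivity|].
  change (dirs (S (S n))) with (flat_map blk (dirs (S n))).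
  simpl pred in *. rewrite Nat.pow_succ_r', <- IH.
  clear IH. induction (dirs (S n)) as [|d l IHl]; [reflexivity|]. simpl. simpl in IHl. lia.
Qed.

Lemma K_ne : forall n, K n <> [].
Proof.
  induction n as [|n IH]; [discriminate|]. destruct n; [discriminate|].
  change (K (S (S n))) with (refine (K (S n))). destruct (K (S n)); [congruence|]. discriminate.
Qed.

Lemma length_K : forall n, length (K n) = S (4 ^ pred n).
Proof.
  intros n. rewrite <- length_dirs.
  rewrite <- (length_map (fun z => pscale (Lc n) (e z))), <- diffs_K, length_diffs.
  destruct (K n) eqn:E; [exfalso; apply (K_ne n E)|]. reflexivity.
Qed.

Lemma nth_diffs : forall l i, (S i < length l)%nat ->
  nth i (diffs l) (0,0) = psub (nth (S i) l (0,0)) (nth i l (0,0)).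
Proof.
  induction l as [|a [|b l] IH]; intros i H; simpl in H; try lia.
  rewrite diffs_cons2. destruct i; [reflexivity|]. simpl. apply IH. simpl. lia.
Qed.

Lemma nth_zdiffs : forall l i, (S i < length l)%nat ->
  nth i (zdiffs l) 0%Z = (nth (S i) l 0%Z - nth i l 0%Z)%Z.
Proof.
  induction l as [|a [|b l] IH]; intros i H; simpl in H; try lia.
  rewrite zdiffs_cons2. destruct i; [reflexivity|]. simpl. apply IH. simpl. lia.
Qed.

Lemma tvec_diffs : forall l m, (1 <= m)%nat -> (m < length l)%nat ->
  tvec l m = nth (m - 1) (diffs l) (0,0).
Proof.
  intros l m H1 H2. rewrite nth_diffs by lia. unfold tvec, vtx.
  f_equal; f_equal; lia.
Qed.

Lemma nth_map' : forall (A B : Type) (g : A -> B) l i d d0, (i < length l)%nat ->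
  nth i (map g l) d = g (nth i l d0).
Proof.
  intros. rewrite (nth_indep _ d (g d0)) by (rewrite length_map; auto). apply map_nth.
Qed.

Definition Dm (n m : nat) : Z := nth (m - 1) (dirs n) 0%Z.

Lemma tvecK : forall n m, (1 <= m)%nat -> (m <= 4 ^ pred n)%nat ->
  tvec (K n) m = pscale (Lc n) (e (Dm n m)).
Proof.
  intros n m H1 H2. rewrite tvec_diffs by (try rewrite length_K; lia).
  rewrite diffs_K. unfold Dm. rewrite (nth_map' _ _ _ _ _ _ 0%Z); [reflexivity|]. rewrite length_dirs. lia.
Qed.

Definition lin (f : affine_map) (p : pt) : pt :=
  (a11 f * fst p + a12 f * snd p, a21 f * fst p + a22 f * snd p).

Lemma vtx_map : forall g l i, (1 <= i)%nat -> (i <= length l)%nat ->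
  vtx (map g l) i = g (vtx l i).
Proof. intros. unfold vtx. apply nth_map'. lia. Qed.

Lemma tvec_aff : forall f l m, (1 <= m)%nat -> (m < length l)%nat ->
  tvec (map (aff_apply f) l) m = lin f (tvec l m).
Proof.
  intros. unfold tvec. rewrite !vtx_map by lia.
  destruct (vtx l (m+1)), (vtx l m). unfold lin, aff_apply, psub; simpl. f_equal; ring.
Qed.

Lemma bracket_lin : forall f u v, bracket (lin f u) (lin f v) = aff_det f * bracket u v.
Proof. intros f [u1 u2] [v1 v2]. unfold bracket, lin, aff_det; simpl. ring. Qed.

Lemma BR : forall L a b, bracket (pscale L (e a)) (pscale L (e b)) = L * L * Sn (b - a).
Proof.
  intros. unfold bracket, pscale, e, Sn; simpl. rewrite minus_IZR.
  replace ((IZR b - IZR a) * (PI/3)) with (IZR b * (PI/3) - IZR a * (PI/3)) by ring.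
  rewrite sin_minus. ring.
Qed.

Lemma pnorm_e : forall c L a, 0 <= L -> c * c = 1 -> pnorm (pscale c (pscale L (e a))) = L.
Proof.
  intros c L a HL Hc. unfold pnorm, dot, pscale, e; simpl.
  replace (c * (L * cos (IZR a * (PI / 3))) * (c * (L * cos (IZR a * (PI / 3)))) +
           c * (L * sin (IZR a * (PI / 3))) * (c * (L * sin (IZR a * (PI / 3)))))
    with ((c*c) * (L * L) * ((sin (IZR a * (PI / 3)))² + (cos (IZR a * (PI / 3)))²))
    by (unfold Rsqr; ring).
  rewrite sin2_cos2, Hc, Rmult_1_l, Rmult_1_r. apply sqrt_square; auto.
Qed.

Lemma VA : forall L a b, 0 < L ->
  vangle (pscale (-1) (pscale L (e a))) (pscale 1 (pscale L (e b))) = acos (- Cn (b - a)).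
Proof.
  intros L a b HL. unfold vangle. rewrite !pnorm_e by lra. f_equal.
  unfold dot, pscale, e, Cn; simpl. rewrite minus_IZR.
  replace ((IZR b - IZR a) * (PI/3)) with (IZR b * (PI/3) - IZR a * (PI/3)) by ring.
  rewrite cos_minus. field. lra.
Qed.

Lemma Lc_pos : forall n, 0 < Lc n.
Proof.
  induction n as [|n IH]; simpl; [lra|]. destruct n; [lra|]. apply Rdiv_lt_0_compat; lra.
Qed.

Lemma sqrt3_pos : 0 < sqrt 3.
Proof. apply sqrt_lt_R0. lra. Qed.

Lemma Sn_1 : Sn 1 = sqrt 3 / 2.
Proof. unfold Sn. rewrite Rmult_1_l. apply sin_PI3. Qed.
Lemma Sn_2 : Sn 2 = sqrt 3 / 2.
Proof. unfold Sn. replace (IZR 2 * (PI/3)) with (PI - PI/3) by lra. rewrite sin_PI_x. apply sin_PI3. Qed.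
Lemma Sn_m1 : Sn (-1) = - (sqrt 3 / 2).
Proof. unfold Sn. replace (IZR (-1) * (PI/3)) with (- (PI/3)) by lra. rewrite sin_neg, sin_PI3. reflexivity. Qed.
Lemma Sn_m2 : Sn (-2) = - (sqrt 3 / 2).
Proof. unfold Sn. replace (IZR (-2) * (PI/3)) with (- (PI - PI/3)) by lra. rewrite sin_neg, sin_PI_x, sin_PI3. reflexivity. Qed.
Lemma Cn_1 : Cn 1 = 1/2.
Proof. unfold Cn. rewrite Rmult_1_l. apply cos_PI3. Qed.
Lemma Cn_m2 : Cn (-2) = - (1/2).
Proof. unfold Cn. replace (IZR (-2) * (PI/3)) with (- (PI - PI/3)) by lra. rewrite cos_neg, Rtrigo_facts.cos_pi_minus, cos_PI3. reflexivity. Qed.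

Lemma acos_half : acos (1/2) = PI/3.
Proof. rewrite <- cos_PI3. apply acos_cos. pose proof PI_RGT_0. lra. Qed.
Lemma acos_mhalf : acos (- (1/2)) = PI - PI/3.
Proof. rewrite <- cos_PI3, <- Rtrigo_facts.cos_pi_minus. apply acos_cos. pose proof PI_RGT_0. lra. Qed.

Lemma Dstep : forall n j j' i, j' = (j+1)%nat -> i = (j - 1)%nat -> (1 <= j)%nat ->
  (j' <= 4 ^ pred n)%nat -> Dm n j' = (Dm n j + nth i (T n) 0)%Z.
Proof.
  intros n j j' i -> -> H1 H2. unfold T, Dm. rewrite nth_zdiffs by (rewrite length_dirs; lia).
  replace (j + 1 - 1)%nat with (S (j - 1)) by lia. lia.
Qed.

Lemma BRr : forall f n m1 m2, (1 <= m1 <= 4 ^ pred n)%nat -> (1 <= m2 <= 4 ^ pred n)%nat ->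
  bracket (tvec (map (aff_apply f) (K n)) m1) (tvec (map (aff_apply f) (K n)) m2)
  = aff_det f * (Lc n * Lc n) * Sn (Dm n m2 - Dm n m1).
Proof.
  intros f n m1 m2 H1 H2.
  rewrite !tvec_aff by (try rewrite length_K; lia).
  rewrite bracket_lin, !tvecK by lia. rewrite BR. ring.
Qed.

Lemma VAt : forall l i, vertex_angle l (i+1) =
  vangle (pscale (-1) (tvec l i)) (pscale 1 (tvec l (i+1))).
Proof.
  intros l i. unfold vertex_angle, tvec. replace (i + 1 - 1)%nat with i by lia.
  destruct (vtx l i), (vtx l (i+1)), (vtx l (i+1+1)). unfold psub, pscale; simpl.
  f_equal; f_equal; ring.
Qed.

Section Fixed.
Variable m : nat.
Let n := S (S m).

Lemma N_eq : (4 ^ pred n = 2 * Mn m + 2)%nat.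
Proof. unfold n, Mn. simpl pred. rewrite Nat.pow_succ_r'. pose proof (pow4_pos m). lia. Qed.

Lemma t_vals : forall k, (1 <= k <= Mn m)%nat ->
  let t := nth (2*k-1) (T n) 0%Z in (t = 1 \/ t = -2)%Z.
Proof.
  intros k Hk t. pose proof (T_vals n ltac:(unfold n; lia)) as HF.
  rewrite Forall_forall in HF. apply HF. apply nth_In. unfold n. rewrite T_len. lia.
Qed.

Lemma ev_vals : forall i j, j = (2 * i)%nat -> (i <= Mn m)%nat -> nth j (T n) 0%Z = 1%Z.
Proof.
  intros i j -> Hi. rewrite <- nth_evens. pose proof (T_evens m) as HF.
  rewrite Forall_forall in HF. apply HF. apply nth_In.
  rewrite (evens_len (Mn m)); [lia|]. apply T_len.
Qed.

Lemma sharp_lemma : forall k, (1 <= k <= Mn m)%nat ->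
  sharpb (K n) (2*k+1) = isM2 (nth (2*k-1) (T n) 0%Z).
Proof.
  intros k Hk. pose proof N_eq as HN.
  pose proof (t_vals k Hk) as Ht. cbv zeta in Ht.
  unfold sharpb. rewrite VAt. rewrite !tvecK by lia. rewrite VA by apply Lc_pos.
  rewrite (Dstep n (2*k) (2*k+1) (2*k-1)) by lia.
  replace (Dm n (2 * k) + nth (2 * k - 1) (T n) 0 - Dm n (2 * k))%Z
    with (nth (2 * k - 1) (T n) 0%Z) by ring.
  pose proof PI_RGT_0.
  destruct Ht as [-> | ->].
  - rewrite Cn_1, acos_mhalf. destruct (Req_EM_T _ _); [lra|reflexivity].
  - rewrite Cn_m2, Ropp_involutive, acos_half. destruct (Req_EM_T _ _); [reflexivity|lra].
Qed.

Lemma code_eq : koch_code n = map isM2 (odds (T n)).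
Proof.
  unfold koch_code. apply nth_ext with false false.
  - rewrite !length_map, length_seq. rewrite (odds_len (Mn m)) by apply T_len.
    unfold n, Mn. replace (S (S m) - 2)%nat with m by lia. reflexivity.
  - intros i Hi. rewrite length_map, length_seq in Hi.
    replace (n - 2)%nat with m in * by (unfold n; lia). fold (Mn m) in *.
    rewrite (nth_map' _ _ _ _ _ _ 0%nat) by (rewrite length_seq; lia).
    rewrite seq_nth by lia.
    rewrite (nth_map' _ _ _ _ _ _ 0%Z) by (rewrite (odds_len (Mn m)) by apply T_len; lia).
    rewrite sharp_lemma by lia. rewrite nth_odds. f_equal. f_equal. lia.
Qed.

End Fixed.

Lemma kap_generic (r : list pt) (k : nat) (C : R) (t : Z) :
 (1 <= k)%nat -> C <> 0 -> (t = 1 \/ t = -2)%Z ->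
 bracket (tvec r (2*k-1)) (tvec r (2*k)) = C * Sn 1 ->
 bracket (tvec r (2*k)) (tvec r (2*k+1)) = C * Sn t ->
 bracket (tvec r (2*k+1)) (tvec r (2*k+2)) = C * Sn 1 ->
 bracket (tvec r (2*k-1)) (tvec r (2*k+1)) = C * Sn (1+t) ->
 bracket (tvec r (2*k)) (tvec r (2*k+2)) = C * Sn (t+1) ->
 bracket (tvec r (2 * k - 1)) (tvec r (2 * k)) <> 0 /\
 bracket (tvec r (2 * k)) (tvec r (2 * k + 1)) <> 0 /\
 (isM2 t = true ->
   kappa r (2 * k) = -1 /\ kappa r (2 * k + 1) = -1 /\
   kappabar r (2 * k) = -1 /\ kappabar r (2 * k + 1) = 1) /\
 (isM2 t = false ->
   kappa r (2 * k) = 1 /\ kappa r (2 * k + 1) = 1 /\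
   kappabar r (2 * k) = 1 /\ kappabar r (2 * k + 1) = 1).
Proof.
  intros Hk HC Ht H1 H2 H3 H4 H5.
  unfold kappa, kappabar.
  replace (2 * k + 1 + 1)%nat with (2 * k + 2)%nat by lia.
  replace (2 * k + 1 - 1)%nat with (2 * k)%nat by lia.
  rewrite H1, H2, H3, H4, H5.
  pose proof sqrt3_pos as Hs.
  destruct Ht as [-> | ->].
  - replace (1 + 1)%Z with 2%Z by reflexivity.
    rewrite Sn_1, Sn_2. cbn [isM2 Z.eqb].
    repeat split; try discriminate; try (apply Rmult_integral_contrapositive; split; lra);
      field; split; lra.
  - replace (1 + -2)%Z with (-1)%Z by reflexivity.
    replace (-2 + 1)%Z with (-1)%Z by reflexivity.
    rewrite Sn_1, Sn_m1, Sn_m2. cbn [isM2 Z.eqb].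
    repeat split; try discriminate; try (apply Rmult_integral_contrapositive; split; lra);
      field; split; lra.
Qed.

Lemma rec_code : forall n : nat, (2 <= n)%nat ->
     koch_code (S n) = koch_code n ++ [false] ++ koch_code n ++ [true]
                       ++ koch_code n ++ [false] ++ koch_code n.
Proof.
  intros n Hn. destruct n as [|[|m]]; [lia|lia|].
  rewrite (code_eq (S m)), (code_eq m). apply codeT_rec.
Qed.

Lemma code2 : koch_code 2 = [true].
Proof. rewrite (code_eq 0). reflexivity. Qed.

Theorem mainTheorem2 :
  (* (i) *)
  (forall (f : affine_map) (n k : nat),
      aff_det f <> 0 -> (2 <= n)%nat ->
      (1 <= k <= 2 * 4 ^ (n - 2) - 1)%nat ->
      let r := map (aff_apply f) (K n) in
      bracket (tvec r (2 * k - 1)) (tvec r (2 * k)) <> 0 /\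
      bracket (tvec r (2 * k)) (tvec r (2 * k + 1)) <> 0 /\
      (nth (k - 1) (koch_code n) false = true ->
         kappa r (2 * k) = -1 /\ kappa r (2 * k + 1) = -1 /\
         kappabar r (2 * k) = -1 /\ kappabar r (2 * k + 1) = 1) /\
      (nth (k - 1) (koch_code n) false = false ->
         kappa r (2 * k) = 1 /\ kappa r (2 * k + 1) = 1 /\
         kappabar r (2 * k) = 1 /\ kappabar r (2 * k + 1) = 1)) /\
  (* (ii) *)
  koch_code 2 = [true] /\
  (forall n : nat, (2 <= n)%nat ->
     koch_code (S n) = koch_code n ++ [false] ++ koch_code n ++ [true]
                       ++ koch_code n ++ [false] ++ koch_code n) /\
  koch_code 3 = [true; false; true; true; true; false; true] /\
  koch_code 4 = [true; false; true; true; true; false; true] ++ [false] ++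
                [true; false; true; true; true; false; true] ++ [true] ++
                [true; false; true; true; true; false; true] ++ [false] ++
                [true; false; true; true; true; false; true] /\
  (forall n : nat, (2 <= n)%nat -> length (koch_code n) = (2 * 4 ^ (n - 2) - 1)%nat).
Proof.
  split; [|split; [exact code2|split; [exact rec_code|split; [|split; [|]]]]].
  - intros f n k Hdet Hn Hk r.
    destruct n as [|[|m]]; [lia|lia|].
    replace (S (S m) - 2)%nat with m in Hk by lia. fold (Mn m) in Hk.
    pose proof (N_eq m) as HN.
    set (t := nth (2*k-1) (T (S (S m))) 0%Z).
    assert (Hc : nth (k - 1) (koch_code (S (S m))) false = isM2 t).
    { rewrite (code_eq m).
      rewrite (nth_map' _ _ _ _ _ _ 0%Z) by (rewrite (odds_len (Mn m)) by apply T_len; lia).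
      rewrite nth_odds. unfold t. do 2 f_equal. lia. }
    rewrite Hc.
    assert (E1 : Dm (S (S m)) (2*k) = (Dm (S (S m)) (2*k-1) + 1)%Z).
    { rewrite (Dstep (S (S m)) (2*k-1) (2*k) (2*k-2)) by lia.
      rewrite (ev_vals m (k-1) (2*k-2)) by lia. reflexivity. }
    assert (E2 : Dm (S (S m)) (2*k+1) = (Dm (S (S m)) (2*k) + t)%Z).
    { rewrite (Dstep (S (S m)) (2*k) (2*k+1) (2*k-1)) by lia. reflexivity. }
    assert (E3 : Dm (S (S m)) (2*k+2) = (Dm (S (S m)) (2*k+1) + 1)%Z).
    { rewrite (Dstep (S (S m)) (2*k+1) (2*k+2) (2*k)) by lia.
      rewrite (ev_vals m k (2*k)) by lia. reflexivity. }
    apply kap_generic with (C := aff_det f * (Lc (S (S m)) * Lc (S (S m)))).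
    + lia.
    + pose proof (Lc_pos (S (S m))). apply Rmult_integral_contrapositive; split; [auto|].
      apply Rmult_integral_contrapositive; split; lra.
    + apply (t_vals m k Hk).
    + unfold r; rewrite BRr by lia. f_equal. f_equal. lia.
    + unfold r; rewrite BRr by lia. f_equal. f_equal. lia.
    + unfold r; rewrite BRr by lia. f_equal. f_equal. lia.
    + unfold r; rewrite BRr by lia. f_equal. f_equal. lia.
    + unfold r; rewrite BRr by lia. f_equal. f_equal. lia.
  - rewrite (rec_code 2), code2 by lia. reflexivity.
  - rewrite (rec_code 3), (rec_code 2), code2 by lia. reflexivity.
  - intros n Hn. unfold koch_code. rewrite length_map, length_seq. reflexivity.
Qed.
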